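(* Let $X$ be a compact metric space and $(f_n)_{n\ge1}$ a sequence of continuous maps $X\to X$. Suppose that either (1) the family $\{f_1^n:n\in\mathbb{N}\}$ is equicontinuous; or (2) $(f_n)$ converges uniformly to a function $\phi\colon X\to X$ and the family $\{\phi\circ f_1^n:n\in\mathbb{N}\}$ is equicontinuous. Then $f_1^p\colon X\to X$ is continuous for every $p\in\mathbb{N}^*$.
   Context: $\mathbb{N}^*$ is the set of free ultrafilters on $\mathbb{N}=\{1,2,\dots\}$. For $p\in\mathbb{N}^*$, $p\text{-}\lim_n x_n$ is the unique $y$ with $\{n:x_n\in V\}\in p$ for all neighbourhoods $V$ of $y$. $f_1^n=f_n\circ\cdots\circ f_1$ and $f_1^p(x)=p\text{-}\lim_n f_1^n(x)$. *)

(* Defs.v *)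
From HB Require Import structures.
From mathcomp Require Import all_boot all_order all_algebra.
From mathcomp Require Import all_classical all_reals all_analysis.
Set Implicit Arguments. Unset Strict Implicit. Unset Printing Implicit Defensive.
Import Order.TTheory GRing.Theory Num.Theory.
Local Open Scope classical_set_scope.

(* Indexing convention: f : nat -> X -> X, with f n standing for f_n for
   n >= 1 (the value f 0 is never used).  comp1 f n = f_n o ... o f_1,
   and comp1 f 0 = id (only used at n = 0, which is irrelevant below). *)
Fixpoint comp1 {X : Type} (f : nat -> X -> X) (n : nat) : X -> X :=
  match n with
  | 0 => id
  | m.+1 => f m.+1 \o comp1 f m
  end.

Definition free_ultrafilter (p : set_system nat) : Prop :=
  UltraFilter p /\ (forall n : nat, exists A, p A /\ ~ A n).

(* p-lim_n u_n : the (unique, in a Hausdorff space) y with u @ p --> y,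
   i.e. {n | u n \in V} \in p for every neighbourhood V of y.
   (xget returns the default u 0 if no such point exists, which does not
   happen in a compact Hausdorff space.) *)
Definition plim {X : topologicalType} (p : set_system nat) (u : nat -> X) : X :=
  xget (u 0%N) [set y | u @ p --> y].

Definition f1p {X : topologicalType} (p : set_system nat) (f : nat -> X -> X)
  : X -> X := fun x => plim p (fun n => comp1 f n x).

Local Open Scope ring_scope.
Definition equicont {R : realType} {X : metricType R} (W : set nat)
  (g : nat -> X -> X) : Prop :=
  forall (x : X) (e : R), 0 < e -> exists2 d : R, 0 < d &
    forall y : X, ball x d y -> forall n, W n -> ball (g n x) e (g n y).

Definition unif_cvg {R : realType} {X : metricType R} (f : nat -> X -> X)
  (phi : X -> X) : Prop :=
  forall e : R, 0 < e -> \forall n \near \oo, forall x : X, ball (phi x) e (f n x).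

(* Main.v *)
Require Import Defs.
From HB Require Import structures.
From mathcomp Require Import all_boot all_order all_algebra.
From mathcomp Require Import all_classical all_reals all_analysis.
From mathcomp Require Import ring lra.
Import Order.TTheory GRing.Theory Num.Theory.
Local Open Scope classical_set_scope.

Section Aux.
Context (R : realType) (X : metricType R).

Lemma plim_cvg (p : set_system nat) (u : nat -> X) :
  compact [set: X] -> UltraFilter p -> u @ p --> plim p u.
Proof.
move=> hXc Up.
have : exists y : X, u @ p --> y.
  have [y [_ cy]] := hXc (u @ p) _ (filterT).
  exists y; apply/cvg_ballP => eps eps0.
  case: (in_ultra_setVsetC (u @^-1` (ball y eps)) Up) => // hC.
  have [z [z1 z2]] := cy (~` ball y eps) (ball y eps) hC (nbhsx_ballx y _ eps0).
  by case: z1.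
by move=> ex; rewrite /plim; apply: (xgetPex (u 0%N) ex).
Qed.

Lemma cofin (p : set_system nat) : free_ultrafilter p ->
  forall N, p [set n | (N <= n)%N].
Proof.
move=> [Up fr]; have PF : ProperFilter p := @ultra_proper _ _ Up; elim=> [|N IH].
  by apply: filterS (@filterT _ _ _) => n.
have [A [pA nA]] := fr N.
apply: filterS (filterI IH pA) => n [/= h1 h2].
rewrite ltn_neqAle h1 andbT; apply/negP => /eqP E; by subst.
Qed.

Local Open Scope ring_scope.

Lemma key (p : set_system nat) (u v : nat -> X) (c e : R) :
  compact [set: X] -> UltraFilter p -> 0 < e ->
  (\forall n \near p, ball (u n) c (v n)) ->
  ball (plim p u) (e + c + e) (plim p v).
Proof.
move=> hXc Up e0 H.
have PF : ProperFilter p := @ultra_proper _ _ Up.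
have hu : \forall n \near p, ball (plim p u) e (u n) := cvg_ball (plim_cvg p u hXc Up) e0.
have hv : \forall n \near p, ball (plim p v) e (v n) := cvg_ball (plim_cvg p v hXc Up) e0.
have huv : \forall n \near p, (ball (plim p u) e (u n) /\ ball (plim p v) e (v n)) /\ ball (u n) c (v n).
  near=> n; split; [split|].
  - by near: n; exact: hu.
  - by near: n; exact: hv.
  - by near: n; exact: H.
have [n [[h1 h2] h3]] := filter_ex huv.
apply: ball_triangle (ball_sym h2).
exact: ball_triangle h1 h3.
Unshelve. all: by end_near.
Qed.

End Aux.

Theorem theorem3p7 (R : realType) (X : metricType R)
  (hXc : compact [set: X]) (f : nat -> X -> X)
  (hf : forall n : nat, (0 < n)%N -> continuous (f n)) :
  (equicont [set n : nat | (0 < n)%N] (comp1 f)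
   \/ exists phi : X -> X,
        unif_cvg f phi /\
        equicont [set n : nat | (0 < n)%N] (fun n => phi \o comp1 f n)) ->
  forall p : set_system nat, free_ultrafilter p -> continuous (f1p p f).
Proof.
move=> H p pfree x.
Local Open Scope ring_scope.
have Up : UltraFilter p by case: pfree.
have PF : ProperFilter p := @ultra_proper _ _ Up.
apply/cvg_ballP => e e0.
case: H => [eq1 | [phi [hu eq2]]].
- have e3 : 0 < e / 3 by apply: divr_gt0.
  have [d d0 hd] := eq1 x _ e3.
  apply/nbhs_ballP; exists d => //= y yd.
  apply: (@le_ball _ _ _ (e / 3 + e / 3 + e / 3)).
    lra.
  apply: key => //.
  have h1 : \forall k \near p, (0 < k)%N := cofin p pfree 1.
  near=> n; apply: hd => //=.
  by near: n; exact: h1.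
- have e5 : 0 < e / 5 by apply: divr_gt0.
  have [d d0 hd] := eq2 x _ e5.
  have [N _ HN] := hu _ e5.
  apply/nbhs_ballP; exists d => //= y yd.
  apply: (@le_ball _ _ _ (e / 5 + (e / 5 + e / 5 + e / 5) + e / 5)).
    lra.
  apply: key => //.
  have h1 : \forall k \near p, (N.+2 <= k)%N := cofin p pfree N.+2.
  near=> n.
  have : (N.+2 <= n)%N by near: n; exact: h1.
  move=> Nn.
  have [m nm] : exists m, n = m.+1.
    by exists n.-1; rewrite prednK //; apply: leq_trans Nn.
  rewrite nm; rewrite nm in Nn; move: Nn => Nm.
  have m0 : (0 < m)%N by move: Nm; rewrite ltnS; apply: leq_trans.
  have Nm' : (N <= m.+1)%N by apply: leq_trans Nm; rewrite leqW // leqW.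
  rewrite /=.
  apply: ball_triangle (HN _ Nm' _).
  apply: ball_triangle (hd _ yd _ m0).
  exact: ball_sym (HN _ Nm' _).
Unshelve. all: by end_near.
Qed.
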